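(* Let $\mathcal{A}$ be a semiprime unital algebra over a field $F$ with $\operatorname{char}(F)\neq2$. Then $\operatorname{QJCent}(\mathcal{A})=\operatorname{Cent}(\mathcal{A})$.
   Context: $\mathcal{A}$ is semiprime if $a\mathcal{A}a=\{0\}$ implies $a=0$. $x\circ y=xy+yx$. $\operatorname{QJCent}(\mathcal{A})$: linear $f:\mathcal{A}\to\mathcal{A}$ with $f(x)\circ y=x\circ f(y)$ for all $x,y$. $\operatorname{Cent}(\mathcal{A})$: linear $f$ with $f(xy)=f(x)y=xf(y)$ for all $x,y$. *)

(* Defs.v *)
From mathcomp Require Import all_boot all_algebra.
Set Implicit Arguments. Unset Strict Implicit. Unset Printing Implicit Defensive.
Import GRing.Theory.
Local Open Scope ring_scope.

Definition jprod (R : pzRingType) (x y : R) : R := x * y + y * x.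

Definition semiprime (R : pzRingType) : Prop :=
  forall a : R, (forall x : R, a * x * a = 0) -> a = 0.

Definition QJCent (F : fieldType) (A : algType F) (f : {linear A -> A}) : Prop :=
  forall x y : A, jprod (f x) y = jprod x (f y).

Definition Cent (F : fieldType) (A : algType F) (f : {linear A -> A}) : Prop :=
  forall x y : A, f (x * y) = f x * y /\ f (x * y) = x * f y.

(* Main.v *)
Require Import Defs.
From mathcomp Require Import all_boot all_algebra.
Import GRing.Theory.
Local Open Scope ring_scope.

Lemma zl (V : zmodType) (p1 p2 p3 p4 p5 p6 : V) :
  p1 + p2 + p3 + p4 = p5 + p1 + p4 + p6 -> p2 - p6 = p5 - p3.
Proof.
move=> E.
have K : forall z x y : V, (z + x) - (z + y) = x - y by move=> z x y; rewrite [z+x]addrC addrKA.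
have : p1 + p2 + p3 + p4 - (p1 + p3 + p4 + p6) = p5 + p1 + p4 + p6 - (p1 + p3 + p4 + p6) by rewrite E.
have -> : p1 + p2 + p3 + p4 = (p1 + p3 + p4) + p2.
  by rewrite -!addrA; congr (_ + _); rewrite addrC -addrA; congr (_ + _); rewrite addrC.
have -> : p5 + p1 + p4 + p6 = (p1 + p4 + p6) + p5.
  by rewrite [RHS]addrC !addrA.
have -> : p1 + p3 + p4 + p6 = (p1 + p4 + p6) + p3.
  by rewrite -!addrA; congr (_ + _); rewrite addrCA; congr (_ + _); rewrite addrC.
rewrite [X in _ = X]K => <-.
have -> : p1 + p4 + p6 + p3 = (p1 + p3 + p4) + p6.
  by rewrite -!addrA; congr (_ + _); rewrite addrA [RHS]addrC.
by rewrite K.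
Qed.

Lemma comm_central (R : pzRingType) (a : R) : semiprime R ->
  (forall x y : R, a * (x * y - y * x) = (x * y - y * x) * a) ->
  forall x, a * x = x * a.
Proof.
move=> sR H x.
have F1 : forall y, (a * x - x * a) * (x * y - y * x) = 0.
  move=> y.
  have := H x (x * y).
  have -> : x * (x * y) - x * y * x = x * (x * y - y * x).
    by rewrite mulrBr !mulrA.
  rewrite mulrA -(mulrA x) -H mulrBl !mulrA => ->.
  by rewrite subrr.
have F2 : forall y z, (a * x - x * a) * y * (x * z - z * x) = 0.
  move=> y z.
  have := F1 (y * z).
  have -> : x * (y * z) - y * z * x = (x * y - y * x) * z + y * (x * z - z * x).
    rewrite mulrBl mulrBr !mulrA addrA; congr (_ + _).
    by rewrite -addrA [-(y*x*z) + _]addrC subrr addr0.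
  by rewrite mulrDr mulrA F1 mul0r add0r mulrA.
apply/eqP; rewrite -subr_eq0; apply/eqP; apply: sR => y.
have := F2 y a.
have -> : x * a - a * x = - (a * x - x * a) by rewrite opprB.
by rewrite mulrN => /eqP; rewrite oppr_eq0 => /eqP.
Qed.

Theorem proposition3p5 (F : fieldType) (A : algType F)
  (charF : ~~ (2%N \in [pchar F])) (sA : semiprime A) :
  forall f : {linear A -> A}, QJCent f <-> Cent f.
Proof.
move=> f; split; last first.
  move=> C x y; rewrite /jprod.
  have [h1 h2] := C x y; have [h3 h4] := C y x.
  by rewrite -h1 -h4 h2 h3 addrC.
move=> Q; set a := f 1.
have h2 : forall x, f x *+ 2 = x * a + a * x.
  by move=> x; have := Q x 1; rewrite /jprod mulr1 mul1r => <-; rewrite mulr2n.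
have Hc : forall x y, a * (x * y - y * x) = (x * y - y * x) * a.
  move=> x y.
  have E : (x*a + a*x) * y + y * (x*a + a*x) = x * (y*a+a*y) + (y*a+a*y) * x.
    rewrite -!h2 !mulrnAl !mulrnAr -!mulrnDl.
    by have := Q x y; rewrite /jprod => ->.
  move: E; rewrite !mulrDl !mulrDr !mulrA => E.
  rewrite mulrN mulNr !mulrA; rewrite !addrA in E.
  exact: (@zl _ (x*a*y) _ _ (y*a*x) _ _ E).
have Hz := @comm_central _ _ sA Hc.
have two : (2%:R : F) != 0.
  by move: charF; rewrite inE negb_and /=.
have hf : forall x, f x = a * x.
  move=> x; have := h2 x; rewrite -Hz -mulr2n -!scaler_nat => /(congr1 (fun z => (2%:R : F)^-1 *: z)).
  by rewrite !scalerA mulVf // !scale1r.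
move=> x y; rewrite !hf mulrA; split => //.
by rewrite Hz -mulrA.
Qed.
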